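(* Let $n\ge1$ and let $A=A[1]\cdots A[n]$ be a sequence of $n$ elements. Let $\#_1,\ldots,\#_n$ be pairwise distinct symbols, each different from every $A[j]$, and let $T=A\,\#_1\#_2\cdots\#_n$, a string of length $2n$. Then $S_T(k)/k\le n$ for all $k\ge2$, and $\delta(T)=S_T(1)=n+|\{A[1],\ldots,A[n]\}|$. In particular, the elements of $A$ are pairwise distinct if and only if $\delta(T)=2n$; equivalently, $A$ has a repeated element if and only if $\delta(T)<2n$.
   Context: For a string $T$, $S_T(k)$ is the number of distinct length-$k$ substrings of $T$, and $\delta(T)=\sup\{S_T(k)/k: k\ge1\}$. *)

(* Defs.v *)
From mathcomp Require Import all_boot all_order all_algebra.
From mathcomp Require Import all_classical all_reals.
Set Implicit Arguments. Unset Strict Implicit. Unset Printing Implicit Defensive.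
Import Order.TTheory GRing.Theory Num.Theory.

Definition factors (S : eqType) (T : seq S) (k : nat) : seq (seq S) :=
  [seq take k (drop i T) | i <- iota 0 ((size T).+1 - k)].

Definition substr_count (S : eqType) (T : seq S) (k : nat) : nat :=
  size (undup (factors T k)).

Local Open Scope classical_set_scope.
Local Open Scope ring_scope.

Definition delta (R : realType) (S : eqType) (T : seq S) : R :=
  sup [set ((substr_count T k)%:R / k%:R : R) | k in [set k : nat | (1 <= k)%N]].

(* Main.v *)
Require Import Defs.
From mathcomp Require Import all_boot all_order all_algebra.
From mathcomp Require Import all_classical all_reals.
Import Order.TTheory GRing.Theory Num.Theory.
Local Open Scope classical_set_scope.
Local Open Scope ring_scope.

Lemma factors1 (S : eqType) (s : seq S) : factors s 1 = [seq [:: x] | x <- s].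
Proof.
elim: s => [|x s IH] //.
move: IH; rewrite /factors /= !subn1 /= => IH.
rewrite take0 -IH -(addn0 1%N) iotaDl -map_comp; congr (_ :: _).
Qed.

Lemma count_le {S : eqType} (s : seq S) k : (substr_count s k <= (size s).+1 - k)%N.
Proof.
rewrite /substr_count; apply: leq_trans (size_undup _) _.
by rewrite /factors size_map size_iota.
Qed.

Theorem mainTheorem4 (R : realType) (S : eqType) (n : nat) (A H : seq S) :
  (1 <= n)%N -> size A = n -> size H = n -> uniq H ->
  (forall h, h \in H -> h \notin A) ->
  let T := A ++ H in
  (forall k : nat, (2 <= k)%N -> (substr_count T k)%:R / k%:R <= (n%:R : R)) /\
  delta R T = (substr_count T 1)%:R /\
  substr_count T 1 = (n + size (undup A))%N /\
  (uniq A <-> delta R T = (2 * n)%:R) /\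
  (~~ uniq A <-> delta R T < (2 * n)%:R).
Proof.
move=> n1 sA sH uH dis T.
have c1 : substr_count T 1 = (n + size (undup A))%N.
  rewrite /substr_count factors1 undup_map_inj; last by move=> x y [].
  rewrite size_map /T undup_cat (undup_id uH) size_cat sH addnC.
  congr (_ + _)%N; congr size; apply/all_filterP/allP => x.
  rewrite mem_undup => xA; apply/negP => xH; by move: (dis x xH); rewrite xA.
have uA : (size (undup A) <= n)%N by rewrite -sA size_undup.
have uA1 : (1 <= size (undup A))%N.
  case: A sA n1 {uA c1 T dis} => [<-|a A _ _] //.
  have : a \in undup (a :: A) by rewrite mem_undup mem_head.
  by case: (undup (a :: A)).
have hk : forall k : nat, (2 <= k)%N -> (substr_count T k)%:R / k%:R <= (n%:R : R).
  move=> k k2; have kp : (0 : R) < k%:R by rewrite ltr0n; case: k k2.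
  rewrite ler_pdivrMr // -natrM ler_nat.
  apply: leq_trans (count_le T k) _.
  rewrite size_cat sA sH; case: k k2 {kp} => [|[|k]] //= _.
  rewrite subSS; apply: leq_trans (leq_subr _ _) _.
  by rewrite mulnS mulnS addnA leq_addr.
have dl : delta R T = (substr_count T 1)%:R.
  rewrite /delta; set E := [set ((substr_count T k)%:R / k%:R : R) | k in [set k : nat | (1 <= k)%N]].
  have E1 : E ((substr_count T 1)%:R) by exists 1%N; [done | rewrite divr1].
  have ub : ubound E ((substr_count T 1)%:R).
    move=> _ [k k1 <-]; case: k k1 => [|[|k]] // _.
      by rewrite divr1.
    apply: le_trans (hk k.+2 isT) _; rewrite c1 ler_nat; exact: leq_addr.
  apply/eqP; rewrite eq_le; apply/andP; split.
    by apply: ge_sup; [exists (substr_count T 1)%:R|].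
  apply: sup_upper_bound => //; split; [exists (substr_count T 1)%:R|exists (substr_count T 1)%:R] => //.
split; first exact: hk.
split; first exact: dl.
split; first exact: c1.
rewrite dl c1; split.
  split.
    by move=> u; rewrite undup_id // sA mul2n -addnn.
  move/eqP; rewrite eqr_nat mul2n -addnn eqn_add2l => /eqP e.
  by apply/negPn; rewrite -ltn_size_undup sA e ltnn.
by rewrite ltr_nat mul2n -addnn ltn_add2l -ltn_size_undup sA.
Qed.
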